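(* Let $G$ be a group, let $(\Gamma,\psi)$ be a $G$-gain graph on $n$ vertices, let $\pi$ be a unitary representation of $G$, and let $\alpha=\{C_0,C_1,\dots,C_{2k}\}$ be a $\pi$-WQH partition of the vertex set of $\Gamma$. Let $(\Gamma^\alpha,\psi^\alpha)$ be the gain graph obtained from $(\Gamma,\psi)$ and $\alpha$ as described in the context, and let $Q_\alpha$ be the matrix associated with $\alpha$. Then, with vertices ordered as $C_0,C_1,\dots,C_{2k}$, $$\pi(A_{(\Gamma^\alpha,\psi^\alpha)})=\pi(Q_\alpha)\,\pi(A_{(\Gamma,\psi)})\,\pi(Q_\alpha),$$ and in particular $(\Gamma,\psi)$ and $(\Gamma^\alpha,\psi^\alpha)$ are $\pi$-cospectral.
   Context: A $G$-gain graph $(\Gamma,\psi)$ consists of a directed graph $\Gamma=(V,A)$ in which every arc $(u,w)$ has its reverse $(w,u)$ (no loops), and a gain function $\psi:A\to G$ with $\psi(w,u)=\psi(u,w)^{-1}$. Set $\psi(v,w)=0\in\mathbb{C}G$ when $v,w$ are not adjacent. For $V=\{v_1,\dots,v_n\}$, the adjacency matrix $A_{(\Gamma,\psi)}\in M_n(\mathbb{C}G)$ has $(i,j)$ entry $\psi(v_i,v_j)$ if $v_i\sim v_j$ and $0$ otherwise; $\mathbb{C}G$ is the complex group algebra with neutral element $1_G$. A unitary representation of degree $d$ is a group homomorphism $\pi:G\to U_d(\mathbb{C})$; it is extended linearly to an algebra homomorphism $\pi:\mathbb{C}G\to M_d(\mathbb{C})$, and to matrices $M\in M_{a,b}(\mathbb{C}G)$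 by replacing each entry $M_{i,j}$ by the $d\times d$ block $\pi(M_{i,j})$. The matrix $\pi(A_{(\Gamma,\psi)})$ is Hermitian; its spectrum is the $\pi$-spectrum of $(\Gamma,\psi)$, and two gain graphs are $\pi$-cospectral if they have the same $\pi$-spectrum. Given a partition $\alpha=\{C_0,\dots,C_{2k}\}$ of $V$, let $\Psi_i(v)=\sum_{w\in C_i,\,w\sim v}\psi(v,w)\in\mathbb{C}G$. It is a $\pi$-WQH partition if: (1) $|C_i|=|C_{i+1}|$ for every odd $i<2k$; (2) for $i,j\in\{1,\dots,2k\}$ and $v,v'\in C_i$, $\pi(\Psi_j(v))=\pi(\Psi_j(v'))$; (3) for odd $i,j<2k$ and $v\in C_i$, $v'\in C_{i+1}$, $\pi(\Psi_j(v))=\pi(\Psi_{j+1}(v'))$ and $\pi(\Psi_{j+1}(v))=\pi(\Psi_j(v'))$; (4) for every $v\in C_0$ and odd $i<2k$, either (a) $\Psi_i(v)=\Psi_{i+1}(v)$, or (b) $\Psi_i(v)=|C_i|g_1$ and $\Psi_{i+1}(v)=|C_{i+1}|g_2$ for some distinct $g_1,g_2\in G\cup\{0\}$. The gain graph $(\Gamma^\alpha,\psi^\alpha)$ on the same vertex set is defined by (with $\psi^\alpha(v,w)=0$ meaning non-adjacency): $\psi^\alpha(v,w)=\psi(v,w)$ for $v,w\in C_1\cup\dots\cup C_{2k}$ and for $v,w\in C_0$; for $v\in C_0$ and odd $i<2k$ with $\Psi_i(v)=\Psi_{i+1}(v)$, $\psi^\alpha(v,w)=\psi(v,w)$ for $w\in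 C_i\cup C_{i+1}$; for $v\in C_0$ and odd $i<2k$ in case (b) with $g_1,g_2$, $\psi^\alpha(v,w)=g_2$ for $w\in C_i$ and $\psi^\alpha(v,w)=g_1$ for $w\in C_{i+1}$ (reversed arcs get inverse gains). For $m\ge1$ let $Q_m=\begin{pmatrix} I_m-\frac1m J_m & \frac1m J_m\\ \frac1m J_m & I_m-\frac1m J_m\end{pmatrix}\in M_{2m}(\mathbb{C}G)$, with $I_m$ the identity (diagonal entries $1_G$) and $J_m$ the all-$1_G$ matrix. With $m_t=|C_{2t-1}|=|C_{2t}|$, $t=1,\dots,k$, let $Q_\alpha=\mathrm{diag}(I_{|C_0|},Q_{m_1},\dots,Q_{m_k})\in M_n(\mathbb{C}G)$. *)

(* Defs.v *)
From HB Require Import structures.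
From mathcomp Require Import all_boot all_order all_algebra.
From mathcomp Require Import reals complex.
Set Implicit Arguments. Unset Strict Implicit. Unset Printing Implicit Defensive.
Import Order.TTheory GRing.Theory Num.Theory.
Local Open Scope ring_scope.

(* psi v w = Some g  <->  v ~ w and the arc (v,w) has gain g;               *)
(* psi v w = None    <->  v, w not adjacent (the value 0 of CG).            *)
Definition gain_graph (G : groupType) (n : nat) (psi : 'I_n -> 'I_n -> option G) :=
  (forall v, psi v v = None) /\
  (forall v w, psi w v = omap (fun g => (g^-1)%g) (psi v w)).

Definition unitary_rep (C : numClosedFieldType) (G : groupType) (d : nat)
    (pi : G -> 'M[C]_d) :=
  (forall g h : G, pi (g * h)%g = pi g *m pi h) /\
  (forall g : G, pi g *m (map_mx Num.conj (pi g))^T = 1%:M).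

Definition pi_entry (C : numClosedFieldType) (G : groupType) (d : nat)
    (pi : G -> 'M[C]_d) (x : option G) : 'M[C]_d :=
  if x is Some g then pi g else 0.

Definition pi_adj (C : numClosedFieldType) (G : groupType) (n d : nat)
    (pi : G -> 'M[C]_d) (psi : 'I_n -> 'I_n -> option G) :
    'M[C]_(\sum_(i < n) d) :=
  \mxblock_(i < n, j < n) pi_entry pi (psi i j).

(* pi-cospectral: pi(A) and pi(A') have the same spectrum (eigenvalues with
   multiplicities), i.e. the same characteristic polynomial. *)
Definition pi_cospectral (C : numClosedFieldType) (G : groupType) (n d : nat)
    (pi : G -> 'M[C]_d) (psi psi' : 'I_n -> 'I_n -> option G) :=
  char_poly (pi_adj pi psi) = char_poly (pi_adj pi psi').

(* Partitions alpha = {C_0,...,C_(2k)} given by the class map part.          *)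
Definition cls (n m : nat) (part : 'I_n -> 'I_m) (c : nat) : {set 'I_n} :=
  [set v | nat_of_ord (part v) == c].

Definition ordered_partition (n m : nat) (part : 'I_n -> 'I_m) :=
  forall v w : 'I_n, (v <= w)%N -> (part v <= part w)%N.

(* coefficient of g in Psi_c(v) = sum_{w in C_c, w ~ v} psi(v,w) in CG *)
Definition Psi_coef (G : groupType) (n m : nat) (part : 'I_n -> 'I_m)
    (psi : 'I_n -> 'I_n -> option G) (c : nat) (v : 'I_n) (g : G) : nat :=
  #|[set w | (w \in cls part c) && (psi v w == Some g)]|.

Definition Psi_eq (G : groupType) (n m : nat) (part : 'I_n -> 'I_m)
    (psi : 'I_n -> 'I_n -> option G) (c c' : nat) (v : 'I_n) :=
  forall g : G, Psi_coef part psi c v g = Psi_coef part psi c' v g.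

(* Psi_c(v) = |C_c| x  in CG, for x in G u {0} (None = 0) *)
Definition Psi_scal (G : groupType) (n m : nat) (part : 'I_n -> 'I_m)
    (psi : 'I_n -> 'I_n -> option G) (c : nat) (v : 'I_n) (x : option G) :=
  forall g : G, Psi_coef part psi c v g = (#|cls part c| * (x == Some g))%N.

Definition pi_Psi (C : numClosedFieldType) (G : groupType) (n m d : nat)
    (pi : G -> 'M[C]_d) (part : 'I_n -> 'I_m)
    (psi : 'I_n -> 'I_n -> option G) (c : nat) (v : 'I_n) : 'M[C]_d :=
  \sum_(w < n | w \in cls part c) pi_entry pi (psi v w).

Definition WQH_partition (C : numClosedFieldType) (G : groupType) (n k d : nat)
    (psi : 'I_n -> 'I_n -> option G) (pi : G -> 'M[C]_d)
    (part : 'I_n -> 'I_(k.*2.+1)) :=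
  [/\ (forall i, odd i -> (i < k.*2)%N -> #|cls part i| = #|cls part i.+1|),
      (forall i j (v v' : 'I_n), (1 <= i <= k.*2)%N -> (1 <= j <= k.*2)%N ->
          v \in cls part i -> v' \in cls part i ->
          pi_Psi pi part psi j v = pi_Psi pi part psi j v'),
      (forall i j (v v' : 'I_n), odd i -> (i < k.*2)%N -> odd j -> (j < k.*2)%N ->
          v \in cls part i -> v' \in cls part i.+1 ->
          pi_Psi pi part psi j v = pi_Psi pi part psi j.+1 v' /\
          pi_Psi pi part psi j.+1 v = pi_Psi pi part psi j v')
    & (forall i (v : 'I_n), odd i -> (i < k.*2)%N -> v \in cls part 0 ->
          Psi_eq part psi i i.+1 v \/
          exists g1 g2 : option G, [/\ g1 <> g2,
             Psi_scal part psi i v g1 & Psi_scal part psi i.+1 v g2])].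

(* the odd index of the pair {C_(2t-1), C_(2t)} containing class c >= 1 *)
Definition oddrep (c : nat) : nat := if odd c then c else c.-1.

Definition WQH_switching (G : groupType) (n m : nat)
    (psi : 'I_n -> 'I_n -> option G) (part : 'I_n -> 'I_m)
    (psia : 'I_n -> 'I_n -> option G) :=
  forall v w : 'I_n,
  [/\ (nat_of_ord (part v) == 0%N) = (nat_of_ord (part w) == 0%N) ->
        psia v w = psi v w,
      nat_of_ord (part v) = 0%N -> nat_of_ord (part w) <> 0%N ->
        let i := oddrep (part w) in
        (Psi_eq part psi i i.+1 v -> psia v w = psi v w) /\
        (forall g1 g2 : option G, g1 <> g2 ->
           Psi_scal part psi i v g1 -> Psi_scal part psi i.+1 v g2 ->
           psia v w = if nat_of_ord (part w) == i then g2 else g1)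
    & nat_of_ord (part v) <> 0%N -> nat_of_ord (part w) = 0%N ->
        psia v w = omap (fun g => (g^-1)%g) (psia w v)].

(* Q_alpha = diag(I_|C_0|, Q_(m_1), ..., Q_(m_k)) (entries are scalar
   multiples of 1_G, recorded here by their complex coefficient) *)
Definition Q_alpha (C : numClosedFieldType) (n m : nat) (part : 'I_n -> 'I_m)
    : 'M[C]_n :=
  \matrix_(v, w)
    if nat_of_ord (part v) == 0%N then
      (if nat_of_ord (part w) == 0%N then (v == w)%:R else 0)
    else if (nat_of_ord (part w) != 0%N) &&
            (oddrep (part v) == oddrep (part w)) then
      (let mt := (#|cls part (oddrep (part v))|%:R : C) in
       if nat_of_ord (part v) == nat_of_ord (part w)
       then (v == w)%:R - mt^-1 else mt^-1)
    else 0.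

Definition pi_Q (C : numClosedFieldType) (n m d : nat) (part : 'I_n -> 'I_m)
    : 'M[C]_(\sum_(i < n) d) :=
  \mxblock_(i < n, j < n) ((Q_alpha C part i j)%:M : 'M[C]_d).

(* Main.v *)
Require Import Defs.
From HB Require Import structures.
From mathcomp Require Import all_boot all_order all_algebra.
From mathcomp Require Import reals complex.
From mathcomp Require Import zify ring.
Import GRing.Theory Num.Theory.
Local Open Scope ring_scope.

Definition partner (a : nat) : nat := if odd a then a.+1 else a.-1.

Lemma oddeq a : exists q, a = (odd a + q.*2)%N.
Proof. by exists a./2; rewrite odd_double_half. Qed.

Ltac oddcase a :=
  let q := fresh "q" in let e := fresh "e" in
  have [q e] := oddeq a; case: (odd a) in e *; subst a;
  [ | case: q => [|q]; [ rewrite /=; try done | rewrite doubleS ] ];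
  rewrite /= ?oddD ?odd_double /= ?negbK ?odd_double /=.

Ltac natsolve := repeat (case: eqP => ? //=); try (exfalso; lia); try lia.

Lemma oddrepE a c : a != 0%N -> c != 0%N ->
  (oddrep c == oddrep a) = (c == a) || (c == partner a).
Proof.
rewrite /oddrep /partner; oddcase a; oddcase c; move=> /eqP ? /eqP ?; natsolve.
Qed.

Lemma partnerK a : a != 0%N -> partner (partner a) = a.
Proof. rewrite /partner; oddcase a; rewrite /= ?oddD ?odd_double ?negbK /=; lia. Qed.

Lemma partner_ne0 a : a != 0%N -> partner a != 0%N.
Proof. rewrite /partner; oddcase a; move=> *; natsolve. Qed.

Lemma partner_neq a : a != 0%N -> partner a != a.
Proof. rewrite /partner; oddcase a; move=> *; natsolve. Qed.

Lemma partner_le k a : a != 0%N -> (a <= k.*2)%N -> (partner a <= k.*2)%N.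
Proof. rewrite /partner; oddcase a; move=> *; lia. Qed.

Lemma oddrep_cases k b : b != 0%N -> (b <= k.*2)%N ->
  odd (oddrep b) /\ (oddrep b < k.*2)%N /\
  ((oddrep b = b /\ partner b = (oddrep b).+1) \/
   (b = (oddrep b).+1 /\ partner b = oddrep b)).
Proof.
rewrite /oddrep /partner; oddcase b; move=> *; rewrite ?odd_double.
- split => //; split; [lia| left; split; lia].
- split => //; split; [lia| right; split; lia].
Qed.

Lemma alg1 (C : fieldType) (V : lmodType C) (X Z : V) (m : nat) :
  (m%:R : C) != 0 -> X - (m%:R : C)^-1 *: (X *+ m - Z *+ m) = Z.
Proof.
move=> hm; rewrite -!scaler_nat -scalerBr scalerA mulVf // scale1r.
by rewrite opprB addrC subrK.
Qed.

Lemma alg2 (C : fieldType) (V : lmodType C) (X ka ka' rb rb' : V) (ms mt : nat) :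
  (ms%:R : C) != 0 -> (mt%:R : C) != 0 ->
  ka *+ mt = rb *+ ms -> ka' *+ mt = rb' *+ ms ->
  X - (ms%:R : C)^-1 *: (ka - ka') - (mt%:R : C)^-1 *: (rb' - rb) = X.
Proof.
move=> hs ht e1 e2.
have sol : forall (a r : V), a *+ mt = r *+ ms -> a = ((mt%:R)^-1 * ms%:R) *: r.
  move=> a r e; rewrite -scalerA scaler_nat -e -scaler_nat scalerA mulVf //.
  by rewrite scale1r.
rewrite (sol _ _ e1) (sol _ _ e2) -scalerBr scalerA mulrCA mulVf // mulr1.
by rewrite -[rb' - rb]opprB scalerN opprK subrK.
Qed.

Section Main.
Set Implicit Arguments.
Variables (R : realType) (G : groupType) (n d k : nat)
    (psi : 'I_n -> 'I_n -> option G) (pi : G -> 'M[R[i]]_d)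
    (part : 'I_n -> 'I_(k.*2.+1)).

Local Notation C := (R[i]).
Local Notation pc v := (nat_of_ord (part v)).
Local Notation Q := (Q_alpha C part).
Local Notation msz c := #|cls part c|.

Hypothesis H1 : forall i, odd i -> (i < k.*2)%N -> msz i = msz i.+1.

Lemma pc_le v : (pc v <= k.*2)%N.
Proof. by rewrite -ltnS. Qed.

Lemma msz_oddrep a : a != 0%N -> (a <= k.*2)%N -> msz (oddrep a) = msz a.
Proof.
move=> a0 ak; have [o [lt [[e _]|[e _]]]] := oddrep_cases k a a0 ak; first by rewrite e.
by rewrite {2}e H1.
Qed.

Lemma msz_partner a : a != 0%N -> (a <= k.*2)%N -> msz (partner a) = msz a.
Proof.
move=> a0 ak; have [o [lt [[e1 e2]|[e1 e2]]]] := oddrep_cases k a a0 ak.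
  by rewrite e2 -H1 // e1.
by rewrite e2 {2}e1 H1.
Qed.

Lemma msz_pos v : (0 < msz (pc v))%N.
Proof. by apply/card_gt0P; exists v; rewrite inE. Qed.

Lemma msz_neq0 v : ((msz (pc v))%:R : C) != 0.
Proof. by rewrite pnatr_eq0 -lt0n msz_pos. Qed.

Lemma Q_row v u : pc v != 0%N ->
  Q v u = (v == u)%:R - (pc u == pc v)%:R / (msz (pc v))%:R
          + (pc u == partner (pc v))%:R / (msz (pc v))%:R.
Proof.
move=> hv; rewrite mxE (negbTE hv).
have [hu|hu] := eqVneq (pc u) 0%N.
  have vu : (v == u) = false by apply/negbTE/eqP => e; move: hv; rewrite e hu.
  rewrite hu /= vu eq_sym (negbTE hv) eq_sym (negbTE (partner_ne0 _ hv)).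
  by rewrite !mul0r subrr addr0.
rewrite /= (eq_sym (oddrep _)) oddrepE // msz_oddrep ?pc_le // /=.
have [e|ne] := eqVneq (pc u) (pc v).
  by rewrite e eq_sym (negbTE (partner_neq _ hv)) /= mul0r addr0 mul1r.
have vu : (v == u) = false by apply/negbTE/eqP => e; move: ne; rewrite e eqxx.
rewrite vu /= mul0r subr0 add0r; case: eqP => _; by rewrite ?mul1r ?mul0r.
Qed.

Lemma Q_sym v w : Q v w = Q w v.
Proof.
rewrite !mxE.
have [v0|v0] := eqVneq (pc v) 0%N; have [w0|w0] := eqVneq (pc w) 0%N;
  rewrite /= ?(eq_sym v) //.
rewrite (eq_sym (oddrep (pc w))); case: eqP => [e|] //=.
by rewrite e (eq_sym (pc w)) (eq_sym w).
Qed.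

Lemma Q_delta v w : (pc v == 0%N) || (pc w == 0%N) -> Q v w = (v == w)%:R.
Proof.
rewrite mxE; have [v0|v0] := eqVneq (pc v) 0%N; have [w0|w0] := eqVneq (pc w) 0%N;
  rewrite /= //.
  by have -> : (v == w) = false by apply/negbTE/eqP => e; move: w0; rewrite -e v0.
by have -> : (v == w) = false by apply/negbTE/eqP => e; move: v0; rewrite e w0.
Qed.

Lemma sum_delta (V : lmodType C) (X : 'I_n -> V) v :
  \sum_u (v == u)%:R *: X u = X v.
Proof.
rewrite (bigD1 v) //= eqxx scale1r big1 ?addr0 // => u.
by rewrite eq_sym => /negbTE ->; rewrite scale0r.
Qed.

Lemma sumQ0 (V : lmodType C) (X : 'I_n -> V) v : pc v = 0%N ->
  \sum_u Q v u *: X u = X v.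
Proof.
move=> v0; rewrite -[RHS](@sum_delta V X); apply: eq_bigr => u _.
by rewrite Q_delta // v0.
Qed.

Lemma sum_ind (V : lmodType C) (X : 'I_n -> V) c (x : C) :
  \sum_u ((pc u == c)%:R * x) *: X u = x *: \sum_(u | u \in cls part c) X u.
Proof.
rewrite scaler_sumr [RHS]big_mkcond; apply: eq_bigr => u _; rewrite inE.
by case: eqP => _; rewrite ?mul1r ?mul0r ?scale0r.
Qed.

Lemma sumQ (V : lmodType C) (X : 'I_n -> V) v : pc v != 0%N ->
  \sum_u Q v u *: X u = X v - (msz (pc v))%:R^-1 *:
     (\sum_(u | u \in cls part (pc v)) X u - \sum_(u | u \in cls part (partner (pc v))) X u).
Proof.
move=> v0; under eq_bigr do rewrite Q_row // scalerDl scalerBl.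
rewrite big_split sumrB /= sum_delta !sum_ind.
by rewrite scalerBr opprD opprK addrA.
Qed.

Lemma multiset (V : zmodType) (F : option G -> V) c c' v :
  F None = 0 -> Psi_eq part psi c c' v ->
  \sum_(u | u \in cls part c) F (psi v u) = \sum_(u | u \in cls part c') F (psi v u).
Proof.
move=> F0 He.
pose S := undup [seq psi v u | u <- enum 'I_n].
have key c0 : \sum_(u | u \in cls part c0) F (psi v u) =
   \sum_(x <- S) F x *+ #|[set u | (u \in cls part c0) && (psi v u == x)]|.
  transitivity (\sum_(u | u \in cls part c0) \sum_(x <- S) (if psi v u == x then F x else 0)).
    apply: eq_bigr => u _.
    rewrite (bigD1_seq (psi v u)) /= ?undup_uniq ?mem_undup //; last first.
      by apply: map_f; rewrite mem_enum.
    by rewrite eqxx big1 ?addr0 // => x; rewrite eq_sym => /negbTE ->.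
  rewrite exchange_big /=; apply: eq_bigr => x _.
  by rewrite -big_mkcondr /= -sumr_const; apply: eq_bigl => u; rewrite inE.
rewrite !key; apply: eq_bigr => -[g|] _; first by have := He g; rewrite /Psi_coef => ->.
by rewrite F0 !mul0rn.
Qed.

Lemma scal_val c v x u : Psi_scal part psi c v x -> u \in cls part c -> psi v u = x.
Proof.
move=> Hs Hu; case Ex: x => [h|].
  have := Hs h; rewrite /Psi_coef Ex eqxx muln1 => Hc.
  have sub : [set w | (w \in cls part c) && (psi v w == Some h)] \subset cls part c.
    by apply/subsetP => w; rewrite inE => /andP[].
  have := subset_cardP Hc sub => /(_ u); rewrite inE Hu /=.
  by move=> /eqP.
case Ep: (psi v u) => [g|] //.
have := Hs g; rewrite Ex /= muln0 /Psi_coef => /eqP; rewrite cards_eq0 => /eqP E0.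
have : u \in [set w | (w \in cls part c) && (psi v w == Some g)] by rewrite inE Hu Ep eqxx.
by rewrite E0 inE.
Qed.

Lemma scal_sum (V : zmodType) (F : option G -> V) c v x :
  Psi_scal part psi c v x ->
  \sum_(u | u \in cls part c) F (psi v u) = F x *+ msz c.
Proof.
move=> Hs; rewrite -sumr_const; apply: eq_bigr => u Hu.
by rewrite (scal_val Hs Hu).
Qed.

Unset Implicit Arguments.
Variable psia : 'I_n -> 'I_n -> option G.
Local Notation E u w := (pi_entry pi (psi u w)).
Local Notation rho c x := (pi_Psi pi part psi c x).

Hypothesis Hgg : gain_graph psi.
Hypothesis Hun : unitary_rep pi.
Hypothesis H2 : forall i j (v v' : 'I_n), (1 <= i <= k.*2)%N -> (1 <= j <= k.*2)%N ->
          v \in cls part i -> v' \in cls part i -> rho j v = rho j v'.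
Hypothesis H3 : forall i j (v v' : 'I_n), odd i -> (i < k.*2)%N -> odd j -> (j < k.*2)%N ->
          v \in cls part i -> v' \in cls part i.+1 ->
          rho j v = rho j.+1 v' /\ rho j.+1 v = rho j v'.
Hypothesis H4 : forall i (v : 'I_n), odd i -> (i < k.*2)%N -> v \in cls part 0 ->
          Psi_eq part psi i i.+1 v \/
          exists g1 g2 : option G, [/\ g1 <> g2,
             Psi_scal part psi i v g1 & Psi_scal part psi i.+1 v g2].
Hypothesis Hsw : WQH_switching psi part psia.
Set Implicit Arguments.

Lemma side (F : option G -> 'M[C]_d) x u : F None = 0 -> pc x = 0%N -> pc u != 0%N ->
  F (psi x u) - (msz (pc u))%:R^-1 *:
    (\sum_(l | l \in cls part (pc u)) F (psi x l)
     - \sum_(l | l \in cls part (partner (pc u))) F (psi x l)) = F (psia x u).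
Proof.
move=> F0 x0 u0.
have u0' : pc u <> 0%N by apply/eqP.
have x0' : x \in cls part 0 by rewrite inE x0.
have hu : u \in cls part (pc u) by rewrite inE.
have hm := msz_neq0 u.
have [oi [lti cases]] := oddrep_cases k (pc u) u0 (pc_le u).
have [_ Hsw2 _] := Hsw x u.
have [Ha Hb] := Hsw2 x0 u0'.
have H4' := @H4 _ x oi lti x0'.
move: (oddrep (pc u)) oi lti cases Ha Hb H4' => i oi lti cases Ha Hb H4'.
case: H4' => [He | [g1 [g2 [neq S1 S2]]]].
  rewrite (Ha He).
  have -> : \sum_(l | l \in cls part (pc u)) F (psi x l) =
            \sum_(l | l \in cls part (partner (pc u))) F (psi x l).
    case: cases => [[e1 e2]|[e1 e2]]; rewrite e2.
      by rewrite -e1; apply: multiset.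
    by rewrite e1; symmetry; apply: multiset.
  by rewrite subrr scaler0 subr0.
rewrite (Hb g1 g2 neq S1 S2).
case: cases => [[e1 e2]|[e1 e2]]; rewrite e2.
  rewrite -e1 in hu hm *; rewrite eqxx (scal_val S1 hu) (scal_sum _ F S1) (scal_sum _ F S2).
  by rewrite -H1 // alg1.
rewrite e1 in hu hm *; rewrite (gtn_eqF (ltnSn i)) (scal_val S2 hu).
rewrite (scal_sum _ F S1) (scal_sum _ F S2).
by rewrite -H1 // alg1 // H1.
Qed.

Definition Hc (X : 'M[C]_d) := (map_mx Num.conj X)^T.

Lemma pi1 : pi 1%g = 1%:M.
Proof.
case: Hun => hom un; have e := hom 1%g 1%g; rewrite mulg1 in e.
by have := un 1%g; rewrite {1}e -mulmxA un mulmx1.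
Qed.

Lemma pi_inv g : pi (g^-1)%g = Hc (pi g).
Proof.
case: Hun => hom un.
by rewrite /Hc -[RHS]mul1mx -pi1 -(mulVg g) hom -mulmxA un mulmx1.
Qed.

Lemma Hc_sum (P : pred 'I_n) (X : 'I_n -> 'M[C]_d) :
  Hc (\sum_(u | P u) X u) = \sum_(u | P u) Hc (X u).
Proof.
apply/matrixP => a b; rewrite /Hc !(mxE, summxE) rmorph_sum.
by apply: eq_bigr => u _; rewrite !mxE.
Qed.

Lemma E_swap u x : E u x = Hc (E x u).
Proof.
case: Hgg => _ hg; rewrite hg; case: (psi x u) => [g|] /=; first exact: pi_inv.
by apply/matrixP => a b; rewrite /Hc !mxE rmorph0.
Qed.

Lemma kapH c x : \sum_(u | u \in cls part c) E u x = Hc (rho c x).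
Proof. by rewrite /pi_Psi Hc_sum; apply: eq_bigr => u _; exact: E_swap. Qed.

Lemma oddP1 a : (0 < a)%N -> odd a.-1 = ~~ odd a.
Proof. by case: a => //= a _; rewrite negbK. Qed.

Lemma odd_lt a : odd a -> (a <= k.*2)%N -> (a < k.*2)%N.
Proof.
move=> oa; rewrite leq_eqVlt => /orP[/eqP e|//].
by move: oa; rewrite e odd_double.
Qed.

Lemma cond3' v u b : pc v != 0%N -> (0 < b <= k.*2)%N ->
  pc u = partner (pc v) -> rho b u = rho (partner b) v.
Proof.
move=> v0 /andP[b0 bk]; rewrite /partner => pu.
have vk := pc_le v; have v0' : (0 < pc v)%N by rewrite lt0n.
have hv : v \in cls part (pc v) by rewrite inE.
case ov: (odd (pc v)) pu => pu; case ob: (odd b).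
- have hu : u \in cls part (pc v).+1 by rewrite inE pu.
  by have [_ h] := H3 _ _ v u ov (odd_lt _ ov vk) ob (odd_lt _ ob bk) hv hu.
- have ob' : odd b.-1 by rewrite oddP1 // ob.
  have hu' : u \in cls part (pc v).+1 by rewrite inE pu.
  have := H3 _ _ v u ov (odd_lt _ ov vk) ob' _ hv hu'.
  by rewrite prednK // => /(_ bk) [-> _].
- have oa' : odd (pc v).-1 by rewrite oddP1 // ov.
  have hu : u \in cls part (pc v).-1 by rewrite inE pu.
  have hv' : v \in cls part ((pc v).-1).+1 by rewrite prednK.
  have lt : ((pc v).-1 < k.*2)%N by lia.
  by have [-> _] := H3 _ _ u v oa' lt ob (odd_lt _ ob bk) hu hv'.
- have oa' : odd (pc v).-1 by rewrite oddP1 // ov.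
  have ob' : odd b.-1 by rewrite oddP1 // ob.
  have hu : u \in cls part (pc v).-1 by rewrite inE pu.
  have hv' : v \in cls part ((pc v).-1).+1 by rewrite prednK.
  have lt : ((pc v).-1 < k.*2)%N by lia.
  have lt' : (b.-1 < k.*2)%N by lia.
  have := H3 _ _ u v oa' lt ob' lt' hu hv'.
  by rewrite prednK // => -[_ ->].
Qed.

Local Notation kap c x := (\sum_(u | u \in cls part c) pi_entry pi (psi u x)).

Lemma rng v : pc v != 0%N -> (0 < pc v <= k.*2)%N.
Proof. by move=> v0; rewrite lt0n v0 pc_le. Qed.

Lemma rngp v : pc v != 0%N -> (0 < partner (pc v) <= k.*2)%N.
Proof. by move=> v0; rewrite lt0n partner_ne0 // partner_le // pc_le. Qed.

Lemma dbl c c0 : \sum_(l | l \in cls part c) kap c0 l = \sum_(u | u \in cls part c0) rho c u.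
Proof. by rewrite exchange_big. Qed.

Lemma sumA v c : pc v != 0%N -> (0 < c <= k.*2)%N ->
  \sum_(u | u \in cls part (pc v)) rho c u = rho c v *+ msz (pc v).
Proof.
move=> v0 hc; rewrite -sumr_const; apply: eq_bigr => u hu.
by apply: (H2 (pc v) c u v) => //; [exact: rng | rewrite inE].
Qed.

Lemma sumA' v c : pc v != 0%N -> (0 < c <= k.*2)%N ->
  \sum_(u | u \in cls part (partner (pc v))) rho c u = rho (partner c) v *+ msz (pc v).
Proof.
move=> v0 hc; rewrite -(msz_partner _ v0 (pc_le v)) -sumr_const; apply: eq_bigr => u hu.
by apply: cond3' => //; move: hu; rewrite inE => /eqP.
Qed.

Lemma sumY v c : pc v != 0%N -> (0 < c <= k.*2)%N ->
  \sum_(l | l \in cls part c)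
     (E v l - (msz (pc v))%:R^-1 *: (kap (pc v) l - kap (partner (pc v)) l))
  = rho (partner c) v.
Proof.
move=> v0 hc.
rewrite sumrB -scaler_sumr sumrB !dbl sumA // sumA' //.
apply: alg1; exact: msz_neq0.
Qed.

Lemma entry v w : pi_entry pi (psia v w) = \sum_l Q w l *: \sum_k Q v k *: E k l.
Proof.
have [Hsw1 _ Hsw3] := Hsw v w.
have [v0|v0] := eqVneq (pc v) 0%N.
  have Y0 l : \sum_k Q v k *: E k l = E v l := @sumQ0 _ (fun k => E k l) v v0.
  under eq_bigr do rewrite Y0.
  have [w0|w0] := eqVneq (pc w) 0%N.
    by rewrite (@sumQ0 _ (fun l => E v l) w w0) Hsw1 // v0 w0.
  rewrite (@sumQ _ (fun l => E v l) w w0) /=.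
  exact: (esym (@side (pi_entry pi) v w erefl v0 w0)).
have Y l : \sum_k Q v k *: E k l = E v l - (msz (pc v))%:R^-1 *:
    (kap (pc v) l - kap (partner (pc v)) l) := @sumQ _ (fun k => E k l) v v0.
under eq_bigr do rewrite Y.
have [w0|w0] := eqVneq (pc w) 0%N.
  rewrite (@sumQ0 _ (fun l => E v l - (msz (pc v))%:R^-1 *:
    (kap (pc v) l - kap (partner (pc v)) l)) w w0) /=.
  have v0' : pc v <> 0%N by apply/eqP.
  rewrite Hsw3 //.
  pose F' := fun o : option G => pi_entry pi (omap (fun g => (g^-1)%g) o).
  have eF u x : E u x = F' (psi x u) by case: Hgg => _ hg; rewrite hg.
  rewrite -/(F' (psia w v)) -(@side F' w v erefl w0 v0).
  by congr (_ - _ *: (_ - _)); [|apply: eq_bigr => u _..]; rewrite eF.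
rewrite (@sumQ _ (fun l => E v l - (msz (pc v))%:R^-1 *:
    (kap (pc v) l - kap (partner (pc v)) l)) w w0) /=.
rewrite (@sumY v (pc w) v0 (@rng w w0)) (@sumY v _ v0 (@rngp w w0)) partnerK //.
rewrite Hsw1; last by rewrite (negbTE v0) (negbTE w0).
have kc c0 : (0 < c0 <= k.*2)%N ->
    kap c0 w *+ msz (pc w) = \sum_(u | u \in cls part c0) rho (pc w) u.
  move=> hc0; rewrite -dbl -sumr_const; apply: eq_bigr => l hl.
  by rewrite !kapH (H2 (pc w) c0 l w) // ?rng // inE.
symmetry; apply: alg2; [exact: msz_neq0|exact: msz_neq0| |].
  by rewrite kc ?rng // sumA ?rng.
by rewrite kc ?rngp // sumA' ?rng.
Qed.


Lemma sum_delta2 w c : \sum_(l | l \in cls part c) ((w == l)%:R : C) = (pc w == c)%:R.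
Proof.
case: eqP => e.
  rewrite (bigD1 w) /= ?inE ?e // eqxx big1 ?addr0 // => l /andP[_].
  by rewrite eq_sym => /negbTE ->.
rewrite big1 // => l; rewrite inE => /eqP hl.
by have -> : (w == l) = false by apply/negbTE/eqP => e'; apply: e; rewrite e'.
Qed.

Lemma sumcls w c : pc w != 0%N ->
  \sum_(l | l \in cls part c) Q l w = (c == partner (pc w))%:R.
Proof.
move=> w0.
have hm := msz_neq0 w.
transitivity (\sum_(l | l \in cls part c) (((w == l)%:R : C) - (c == pc w)%:R / (msz (pc w))%:R
     + (c == partner (pc w))%:R / (msz (pc w))%:R)).
  apply: eq_bigr => l; rewrite inE => /eqP hl. rewrite Q_sym Q_row; last exact: w0. by rewrite hl.
rewrite big_split sumrB /= sum_delta2 !sumr_const.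
have [e|ne] := eqVneq c (pc w).
  rewrite e ?eqxx [pc w == partner _]eq_sym (negbTE (partner_neq _ w0)) /=.
  by rewrite mul1r mul0r mul0rn addr0 -[X in _ - X]mulr_natr mulVf // subrr.
rewrite mul0r mul0rn subr0 add0r.
case: eqP => [->|_] /=; last by rewrite mul0r mul0rn.
by rewrite mul1r msz_partner ?pc_le // -[LHS]mulr_natr mulVf.
Qed.


Lemma sum_scal (P : pred 'I_n) (f : 'I_n -> C) :
  \sum_(l | P l) ((f l)%:M : 'M[C]_d) = (\sum_(l | P l) f l)%:M.
Proof. by rewrite raddf_sum. Qed.

Lemma Q2 v w : \sum_l Q v l *: ((Q l w)%:M : 'M[C]_d) = ((v == w)%:R)%:M.
Proof.
have [v0|v0] := eqVneq (pc v) 0%N.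
  rewrite (@sumQ0 _ (fun l => (Q l w)%:M) v v0) /= Q_delta; first by [].
  by rewrite v0.
rewrite (@sumQ _ (fun l => (Q l w)%:M) v v0) /= !sum_scal.
have [w0|w0] := eqVneq (pc w) 0%N.
  have z c : c != 0%N -> \sum_(l | l \in cls part c) Q l w = 0.
    move=> c0; apply: big1 => l; rewrite inE => /eqP hl.
    rewrite Q_delta; last by rewrite w0 orbT.
    have -> : (l == w) = false by apply/negbTE/eqP => e; move: c0; rewrite -hl e w0.
    by [].
  rewrite (z _ v0) (z _ (partner_ne0 _ v0)) subrr scaler0 subr0 Q_delta; first by [].
  by rewrite w0 orbT.
rewrite (@sumcls w (pc v) w0) (@sumcls w (partner (pc v)) w0) (@Q_row v w v0).
have e1 : (pc w == partner (pc v)) = (pc v == partner (pc w)).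
  by apply/eqP/eqP => ->; rewrite partnerK.
have e2 : (partner (pc v) == partner (pc w)) = (pc v == pc w).
  by apply/eqP/eqP => [e|->//]; rewrite -(partnerK _ v0) e partnerK.
rewrite e1 e2 (eq_sym (pc w)) -raddfB scale_scalar_mx -raddfB; congr (_%:M).
by ring.
Qed.


Lemma Qsq : pi_Q C d part *m pi_Q C d part = 1%:M.
Proof.
rewrite /pi_Q mul_mxblock -mxdiagZ /mxdiag; apply: eq_mxblock => v w.
under eq_bigr do rewrite mul_scalar_mx.
rewrite Q2 conform_mx_id.
by case: (v == w); rewrite ?raddf0.
Qed.

Lemma adj_eq : pi_adj pi psia = pi_Q C d part *m pi_adj pi psi *m pi_Q C d part.
Proof.
rewrite /pi_adj /pi_Q !mul_mxblock; apply: eq_mxblock => v w.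
rewrite entry; apply: eq_bigr => l _.
rewrite mul_mx_scalar [Q l w]Q_sym; congr (_ *: _).
by apply: eq_bigr => j _; rewrite mul_scalar_mx.
Qed.

End Main.
Unset Implicit Arguments.

Lemma cp_conj (F : fieldType) m (P A : 'M[F]_m) : P *m P = 1%:M ->
  char_poly (P *m A *m P) = char_poly A.
Proof.
move=> PP0; rewrite /char_poly /char_poly_mx.
set P' := map_mx polyC P.
have PP : P' *m P' = 1%:M by rewrite -map_mxM PP0 map_scalar_mx.
have -> : 'X%:M - map_mx polyC (P *m A *m P) = P' *m ('X%:M - map_mx polyC A) *m P'.
  rewrite !map_mxM mulmxBr mulmxBl -/P' scalar_mxC -['X%:M *m P' *m P']mulmxA PP mulmx1.
  by [].
by rewrite !det_mulmx mulrAC -det_mulmx PP det1 mul1r.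
Qed.

Theorem mainTheorem3 (R : realType) (G : groupType) (n d k : nat)
    (psi : 'I_n -> 'I_n -> option G) (pi : G -> 'M[R[i]]_d)
    (part : 'I_n -> 'I_(k.*2.+1)) (psia : 'I_n -> 'I_n -> option G) :
  gain_graph psi ->
  unitary_rep pi ->
  ordered_partition part ->
  WQH_partition psi pi part ->
  WQH_switching psi part psia ->
  pi_adj pi psia = pi_Q R[i] d part *m pi_adj pi psi *m pi_Q R[i] d part
  /\ pi_cospectral pi psi psia.
Proof.
move=> gg un _ [H1 H2 H3 H4] sw.
have E : pi_adj pi psia = pi_Q R[i] d part *m pi_adj pi psi *m pi_Q R[i] d part.
  by apply: adj_eq.
split; first exact: E.
rewrite /pi_cospectral E cp_conj //.
by apply: Qsq.
Qed.
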